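(* Let $H = N \rtimes T$ be a finite group where $N$ is abelian and $T$ is flat. Then $\mathrm{MaxDim}(H) = \mathrm{MaxDim}_T(N) + \mathrm{MaxDim}(T)$, where $T$ acts on $N$ by conjugation.
   Context: All groups are finite. A subset $s$ of a group is irredundant if $\langle s \setminus \{h\}\rangle \neq \langle s \rangle$ for every $h \in s$; $m(G)$ is the maximal size of an irredundant generating set of $G$ and $i(G)$ the maximal size of an irredundant subset of $G$. $G$ is flat if $m(G) = i(G)$. A finite set $\{H_1,\dots,H_n\}$ of subgroups of $G$ is in general position if for every $1 \le j \le n$, $\bigcap_{i \neq j} H_i \supsetneq \bigcap_{i} H_i$. $\mathrm{MaxDim}(G)$ is the largest cardinality of a collection of maximal subgroups of $G$ in general position. If a group $B$ acts on $G$, $\mathrm{MaxDim}_B(G)$ is the largest cardinality of a collection of maximal $B$-invariant (proper) subgroups of $G$ that is in general position. *)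

(* Defs.v *)
From mathcomp Require Import all_boot all_fingroup.
From mathcomp Require Import gseries.
Set Implicit Arguments. Unset Strict Implicit. Unset Printing Implicit Defensive.
Local Open Scope group_scope.

Section Defs.
Variable gT : finGroupType.

Definition irredundant (s : {set gT}) : bool :=
  [forall h in s, <<s :\ h>> != <<s>>].

Definition m_gen (G : {set gT}) : nat :=
  \max_(s : {set gT} | [&& s \subset G, <<s>> == G & irredundant s]) #|s|.

Definition i_irr (G : {set gT}) : nat :=
  \max_(s : {set gT} | (s \subset G) && irredundant s) #|s|.

Definition flat (G : {set gT}) : bool := m_gen G == i_irr G.

(* Intersections are taken inside the ambient group G (empty intersection = G). *)
Definition gen_pos (G : {set gT}) (S : {set {group gT}}) : bool :=
  [forall K in S,
     (G :&: \bigcap_(L in S) (L : {set gT}))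
       \proper (G :&: \bigcap_(L in S :\ K) (L : {set gT}))].

Definition MaxDim (G : {set gT}) : nat :=
  \max_(S : {set {group gT}} | [forall M in S, maximal M G] && gen_pos G S) #|S|.

Definition maxinv (B G : {set gT}) (M : {group gT}) : bool :=
  [max M of K | (K \proper G) && (B \subset 'N(K))].

Definition MaxDim_act (B G : {set gT}) : nat :=
  \max_(S : {set {group gT}} |
        [forall M in S, maxinv B G M] && gen_pos G S) #|S|.

End Defs.

(* Main.v *)
Require Import Defs.
From mathcomp Require Import all_boot all_fingroup.
From mathcomp Require Import gseries.
Local Open Scope group_scope.

Section Gen.
Variable gT : finGroupType.
Implicit Types (G : {set gT}) (S : {set {group gT}}).

Lemma capD1S G S (K : {group gT}) :
  G :&: \bigcap_(L in S) (L : {set gT}) \subset G :&: \bigcap_(L in S :\ K) (L : {set gT}).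
Proof.
apply: setIS; apply/bigcapsP => L; rewrite inE => /andP[_ LS].
exact: bigcap_inf.
Qed.

Lemma MaxDim_ge G S :
  (forall M, M \in S -> maximal M G) -> gen_pos G S -> #|S| <= MaxDim G.
Proof.
move=> hM hg; rewrite /MaxDim.
apply: (leq_bigmax_cond (F := fun S : {set {group gT}} => #|S|)).
by rewrite hg andbT; apply/forallP => M; apply/implyP => /hM.
Qed.

Lemma MaxDim_act_ge B G S :
  (forall M, M \in S -> maxinv B G M) -> gen_pos G S -> #|S| <= MaxDim_act B G.
Proof.
move=> hM hg; rewrite /MaxDim_act.
apply: (leq_bigmax_cond (F := fun S : {set {group gT}} => #|S|)).
by rewrite hg andbT; apply/forallP => M; apply/implyP => /hM.
Qed.

Lemma gen_pos0 G : gen_pos G set0.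
Proof. by apply/forallP => K; rewrite inE. Qed.

Lemma MaxDim_ex G : exists2 S : {set {group gT}},
  (forall M, M \in S -> maximal M G) /\ gen_pos G S & MaxDim G = #|S|.
Proof.
rewrite /MaxDim.
have [|S0 hS0 e] := @eq_bigmax_cond _
   (fun S : {set {group gT}} => [forall M in S, maximal M G] && gen_pos G S) (fun S : {set {group gT}} => #|S|).
  apply/card_gt0P; exists set0; rewrite unfold_in /= gen_pos0 andbT.
  by apply/forallP => M; rewrite inE.
exists S0 => //; move: hS0; rewrite unfold_in => /andP[/forallP h ->]; split=> //.
by move=> M /(implyP (h M)).
Qed.

Lemma MaxDim_act_ex B G : exists2 S : {set {group gT}},
  (forall M, M \in S -> maxinv B G M) /\ gen_pos G S & MaxDim_act B G = #|S|.
Proof.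
rewrite /MaxDim_act.
have [|S0 hS0 e] := @eq_bigmax_cond _
   (fun S : {set {group gT}} => [forall M in S, maxinv B G M] && gen_pos G S) (fun S : {set {group gT}} => #|S|).
  apply/card_gt0P; exists set0; rewrite unfold_in /= gen_pos0 andbT.
  by apply/forallP => M; rewrite inE.
exists S0 => //; move: hS0; rewrite unfold_in => /andP[/forallP h ->]; split=> //.
by move=> M /(implyP (h M)).
Qed.

Lemma i_irr_ge G (s : {set gT}) : s \subset G -> irredundant s -> #|s| <= i_irr G.
Proof.
move=> sG irr; rewrite /i_irr.
apply: (leq_bigmax_cond (F := fun s : {set gT} => #|s|)).
by rewrite sG irr.
Qed.

Lemma m_gen_le (G : {group gT}) : m_gen G <= MaxDim G.
Proof.
rewrite /m_gen; apply/bigmax_leqP => s /and3P[sG /eqP gs irr].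
pose f h := odflt G [pick M : {group gT} | maximal M G & <<s :\ h>> \subset M].
have fP h : h \in s -> [/\ maximal (f h) G, <<s :\ h>> \subset f h & h \notin f h].
  move=> hs.
  have nM : forall M : {group gT}, maximal M G -> <<s :\ h>> \subset M -> h \notin M.
    move=> M mM sM; apply/negP => hM.
    have : s \subset M.
      apply/subsetP => x xs; case: (eqVneq x h) => [->//|xh].
      by apply: (subsetP sM); apply: mem_gen; rewrite !inE xh.
    rewrite -gen_subG gs => GM.
    by move: (maxgroupp mM); rewrite /proper GM andbF.
  rewrite /f; case: pickP => [M /andP[mM sM]|none] /=.
    by split=> //; apply: nM.
  have := maximal_exists (H := <<s :\ h>>%G) (G := G).
  rewrite gen_subG (subset_trans (subD1set s h) sG) => /(_ isT) [eqG|[M mM sM]].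
    have := irr; rewrite /irredundant => /forallP/(_ h)/implyP/(_ hs).
    by rewrite gs /= eqG eqxx.
  by move: (none M); rewrite mM sM.
have finj : {in s &, injective f}.
  move=> h1 h2 h1s h2s eqf; apply/eqP; apply/negP => /negP ne.
  have [_ s2 _] := fP _ h2s; have [_ _ n1] := fP _ h1s.
  by move: n1; rewrite eqf (subsetP s2) // mem_gen // !inE ne.
rewrite -(card_in_imset finj); apply: MaxDim_ge.
  by move=> M /imsetP[h hs ->]; have [] := fP _ hs.
apply/forallP => K; apply/implyP => /imsetP[h hs ->].
apply/properP; split; first exact: capD1S.
have [_ _ nh] := fP _ hs.
exists h.
  rewrite inE (subsetP sG) //=; apply/bigcapP => L; rewrite !inE => /andP[Lf /imsetP[h' h's eL]].
  rewrite eL; have [_ s' _] := fP _ h's; apply: (subsetP s'); apply: mem_gen.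
  by rewrite !inE hs andbT; apply: contraNneq Lf => ->; rewrite eL.
rewrite inE negb_and; apply/orP; right; apply/bigcapP => /(_ (f h)).
by rewrite imset_f // => /(_ isT); apply/negP.
Qed.


Section Main.
Variables (H N T : {group gT}).
Hypothesis sd : N ><| T = H.
Hypothesis abN : abelian N.

Let ctx := sdprod_context sd.
Lemma nNH : N <| H. Proof. by case: ctx. Qed.
Lemma sTH : T \subset H. Proof. by case: ctx. Qed.
Lemma eH : N * T = H. Proof. by case: ctx. Qed.
Lemma nNT : T \subset 'N(N). Proof. by case: ctx. Qed.
Lemma tI : N :&: T = 1. Proof. by case: ctx. Qed.
Lemma sNH : N \subset H. Proof. exact: normal_sub nNH. Qed.

Lemma inNT1 x : x \in N -> x \in T -> x = 1.
Proof. move=> xN xT; have: x \in N :&: T by rewrite inE xN. by rewrite tI => /set1gP. Qed.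

Lemma decompN (K : {set gT}) n t : K \subset N -> n \in N -> t \in T ->
  n * t \in K * T -> n \in K.
Proof.
move=> KN nN tT /mulsgP[k t' kK t'T e].
have e2 : k^-1 * n = t' * t^-1.
  by rewrite -[n](mulgK t) e !mulgA mulVg mul1g.
have : k^-1 * n = 1.
  apply: inNT1; first by rewrite groupM // groupV (subsetP KN).
  by rewrite e2 groupM // groupV.
by move/eqP; rewrite -(inj_eq (mulgI k)) mulgA mulgV mul1g mulg1 => /eqP ->.
Qed.

Lemma decompT (L : {set gT}) n t : L \subset T -> n \in N -> t \in T ->
  n * t \in N * L -> t \in L.
Proof.
move=> LT nN tT /mulsgP[n' l n'N lL e].
have e2 : t * l^-1 = n^-1 * n'.
  by rewrite -[t](mulKg n) e !mulgA mulgK.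
have : t * l^-1 = 1.
  apply: inNT1; last by rewrite groupM // groupV (subsetP LT).
  by rewrite e2 groupM // groupV.
by move/eqP; rewrite -(inj_eq (mulIg l)) -mulgA mulVg mulg1 mul1g => /eqP ->.
Qed.

Lemma maxinv_KT (K : {group gT}) : maxinv T N K ->
  maximal (K <*> T) H /\ (K <*> T) :&: N = K.
Proof.
move=> /maxgroupP[/andP[pKN nKT] mK].
have KN := proper_sub pKN.
have eKT : K <*> T = K * T :> {set gT} by rewrite norm_joinEr.
have gKT : gval (K <*> T)%G = K * T by exact: eKT.
have iKT : (K <*> T) :&: N = K.
  by rewrite eKT -group_modl // setIC tI mulg1.
split=> //; apply/maxgroupP; split.
  rewrite /proper gKT -{1}eH mulSg //=; apply/negP => HKT.
  have : N \subset K by rewrite -iKT subsetI subxx andbT eKT (subset_trans sNH).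
  by move: pKN; rewrite /proper => /andP[_ /negP].
move=> M pMH sKTM.
have TM : T \subset M by rewrite (subset_trans _ sKTM) // joing_subr.
have KM : K \subset M by rewrite (subset_trans _ sKTM) // joing_subl.
have p1 : ((M :&: N)%G \proper N) && (T \subset 'N(M :&: N)).
  apply/andP; split; last by apply: normsI; [exact: subset_trans TM (normG M) | exact: nNT].
  rewrite properEneq subsetIr andbT; apply/negP => /eqP eMN.
  have NM : N \subset M by rewrite -eMN subsetIl.
  move: pMH; rewrite /= /proper => /andP[_ /negP]; apply.
  by rewrite -eH mulG_subG NM TM.
have KMN : K \subset M :&: N by rewrite subsetI KM.
have eK' := mK (M :&: N)%G p1 KMN.

have eK2 : M :&: N = K by move: (congr1 val eK').

rewrite gKT -eK2 group_modr // eH.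
by apply/esym/setIidPl; exact: proper_sub pMH.
Qed.

Lemma max_NL (L : {group gT}) : maximal L T ->
  maximal (N <*> L) H /\ (N <*> L) :&: T = L.
Proof.
move=> /maxgroupP[pLT mL].
have LT := proper_sub pLT.
have eNL : N <*> L = N * L :> {set gT}.
  by rewrite norm_joinEr // (subset_trans LT nNT).
have gNL : gval (N <*> L)%G = N * L by exact: eNL.
have iNL : (N <*> L) :&: T = L.
  by rewrite eNL setIC -group_modr // setIC tI mul1g.
split=> //; apply/maxgroupP; split.
  rewrite /proper gNL -{1}eH mulgS //=; apply/negP => HNL.
  have : T \subset L by rewrite -iNL subsetI subxx andbT eNL (subset_trans sTH).
  by move: pLT; rewrite /proper => /andP[_ /negP].
move=> M pMH sNLM.
have NM : N \subset M by rewrite (subset_trans _ sNLM) // joing_subl.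
have LM : L \subset M by rewrite (subset_trans _ sNLM) // joing_subr.
have p1 : (M :&: T)%G \proper T.
  rewrite properEneq subsetIr andbT; apply/negP => /eqP eMT.
  have TM : T \subset M by rewrite -eMT subsetIl.
  move: pMH; rewrite /= /proper => /andP[_ /negP]; apply.
  by rewrite -eH mulG_subG NM TM.
have LMT : L \subset M :&: T by rewrite subsetI LM.
have eL' := mL (M :&: T)%G p1 LMT.
have eL2 : M :&: T = L by move: (congr1 val eL').
rewrite gNL -eL2 setIC group_modl // eH.
by apply/esym/setIidPr; exact: proper_sub pMH.
Qed.

Lemma maxinv_MN (M : {group gT}) : maximal M H -> ~~ (N \subset M) ->
  maxinv T N (M :&: N)%G.
Proof.
move=> mMH nNM; have /maxgroupP[pMH mM] := mMH.
have MH := proper_sub pMH.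
have normA (K : {group gT}) : K \subset N -> N \subset 'N(K).
  by move=> KN; apply: cents_norm; apply: subset_trans abN (centS KN).
have eMN : M <*> N = H :> {set gT}.
  apply/eqP; rewrite eqEsubset join_subG MH sNH /=.
  apply/negP => /negP nH.
  have pj : (M <*> N)%G \proper H.
    by rewrite /proper /= join_subG MH sNH.
  have := mM _ pj (joing_subl _ _) => eMN'.
  by move: nNM; rewrite -eMN' /= joing_subr.
apply/maxgroupP; split.
  apply/andP; split.
    rewrite properEneq subsetIr andbT; apply/negP => /eqP e.
    by move: nNM; rewrite -e subsetIl.
  apply: subset_trans sTH _; rewrite -eMN join_subG.
  rewrite normsI ?normG ?(subset_trans MH (normal_norm nNH)) //=.
  by apply: normA; exact: subsetIr.
move=> K /andP[pKN nKT] sK.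
have KN := proper_sub pKN.
have nKH : H \subset 'N(K) by rewrite -eH mulG_subG normA.
have nKM : M \subset 'N(K) := subset_trans MH nKH.
case: (boolP ((M <*> K)%G \proper H)) => [pj|npj].
  have := mM _ pj (joing_subl _ _) => eMK.
  have KM : K \subset M by rewrite -eMK /= joing_subr.
  apply/eqP; rewrite eqEsubset sK /= subsetI KM KN.
  by [].
exfalso; move: npj; rewrite /proper /= join_subG MH (subset_trans KN sNH) /=.
rewrite norm_joinEl // => /negbNE HMK.
have : N \subset K.
  have -> : gval N = N :&: (M * K) by apply/esym/setIidPl; apply: subset_trans sNH HMK.
  rewrite -group_modr //; apply: mul_subG => //; by rewrite setIC.
by move: pKN; rewrite /proper KN => /negP.
Qed.

Lemma gen_pos_wit G (S : {set {group gT}}) (K : {group gT}) : gen_pos G S -> K \in S ->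
  exists2 x, x \in G /\ (forall L : {group gT}, L \in S -> L != K -> x \in L) & x \notin K.
Proof.
move=> /forallP/(_ K)/implyP hg KS; have /properP[_ [x xin xnin]] := hg KS.
move: xin; rewrite inE => /andP[xG /bigcapP xL].
have xL' : forall L : {group gT}, L \in S -> L != K -> x \in L.
  by move=> L LS LK; apply: xL; rewrite !inE LK.
exists x => //; apply/negP => xK; move/negP: xnin; apply.
rewrite inE xG; apply/bigcapP => L LS; case: (eqVneq L K) => [->//|]; exact: xL'.
Qed.

Lemma MaxDim_geq : MaxDim_act T N + MaxDim T <= MaxDim H.
Proof.
have [S1 [h1 g1] ->] := MaxDim_act_ex T N.
have [S2 [h2 g2] ->] := MaxDim_ex T.
pose f1 (K : {group gT}) := (K <*> T)%G.
pose f2 (L : {group gT}) := (N <*> L)%G.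
have i1 : {in S1 &, injective f1}.
  move=> K1 K2 /h1/maxinv_KT[_ e1] /h1/maxinv_KT[_ e2] e.
  have e' := congr1 (@gval gT) e; rewrite /f1 /= in e'.
  by apply: group_inj; rewrite -e1 -e2 e'.
have i2 : {in S2 &, injective f2}.
  move=> K1 K2 /h2/max_NL[_ e1] /h2/max_NL[_ e2] e.
  have e' := congr1 (@gval gT) e; rewrite /f2 /= in e'.
  by apply: group_inj; rewrite -e1 -e2 e'.
have d12 K L : K \in S1 -> L \in S2 -> f1 K != f2 L.
  move=> /h1 mK _; apply/negP => /eqP e.
  have [_ e1] := maxinv_KT _ mK.
  have : N \subset K.
    by rewrite -e1 subsetI subxx andbT -[gval (K <*> T)]/(gval (f1 K)) e /= joing_subl.
  by move: mK => /maxgroupp/andP[]; rewrite /proper => /andP[_ /negP].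
set S := f1 @: S1 :|: f2 @: S2.
have -> : #|S1| + #|S2| = #|S|.
  rewrite cardsU (card_in_imset i1) (card_in_imset i2).
  suff -> : f1 @: S1 :&: f2 @: S2 = set0 by rewrite cards0 subn0.
  apply/setP => X; rewrite !inE; apply/negP => /andP[/imsetP[K KS ->] /imsetP[L LS e]].
  by move: (d12 K L KS LS); rewrite e eqxx.
apply: MaxDim_ge.
  move=> X; rewrite inE => /orP[/imsetP[K /h1 /maxinv_KT[m _] ->]|/imsetP[L /h2 /max_NL[m _] ->]] //.
apply/forallP => X; apply/implyP; rewrite inE => /orP[/imsetP[K KS ->]|/imsetP[L LS ->]].
- have [x [xN xo] xK] := gen_pos_wit _ _ _ g1 KS.
  have KN : K \subset N by have /maxgroupp/andP[/proper_sub] := h1 _ KS.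
  apply/properP; split; first exact: capD1S.
  exists x.
    rewrite inE (subsetP sNH) //=; apply/bigcapP => Y; rewrite !inE => /andP[YX].
    case/orP=> [/imsetP[K' K'S eY]|/imsetP[L' L'S ->]]; last first.
      by rewrite /f2 /= (subsetP (joing_subl _ _)).
    rewrite eY /f1 /= (subsetP (joing_subl _ _)) //; apply: xo => //.
    by apply: contraNneq YX => eK; rewrite eY eK.
  rewrite inE negb_and; apply/orP; right; apply/negP => /bigcapP/(_ (f1 K)).
  rewrite inE imset_f // => /(_ isT); rewrite /f1 /= norm_joinEr; last first.
    by have /maxgroupp/andP[] := h1 _ KS.
  move=> xKT; have := decompN _ _ _ KN xN (group1 T); rewrite mulg1 => /(_ xKT).
  by apply/negP.
- have [x [xT xo] xL] := gen_pos_wit _ _ _ g2 LS.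
  have LT : L \subset T by have /maxgroupp/proper_sub := h2 _ LS.
  apply/properP; split; first exact: capD1S.
  exists x.
    rewrite inE (subsetP sTH) //=; apply/bigcapP => Y; rewrite !inE => /andP[YX].
    case/orP=> [/imsetP[K' K'S ->]|/imsetP[L' L'S eY]].
      by rewrite /f1 /= (subsetP (joing_subr _ _)).
    rewrite eY /f2 /= (subsetP (joing_subr _ _)) //; apply: xo => //.
    by apply: contraNneq YX => eL; rewrite eY eL.
  rewrite inE negb_and; apply/orP; right; apply/negP => /bigcapP/(_ (f2 L)).
  rewrite inE imset_f ?orbT // => /(_ isT); rewrite /f2 /= norm_joinEr; last first.
    exact: subset_trans LT nNT.
  move=> xNL; have := decompT _ _ _ LT (group1 N) xT; rewrite mul1g => /(_ xNL).
  by apply/negP.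
Qed.

Lemma MaxDim_leq : flat T -> MaxDim H <= MaxDim_act T N + MaxDim T.
Proof.
move=> flT.
have [F [hF gF] ->] := MaxDim_ex H.
set A := [set M in F | ~~ (N \subset M)].
pose P := fun Y : {set {group gT}} => (Y \subset A) &&
  (N :&: \bigcap_(M in Y) gval M == N :&: \bigcap_(M in A) gval M).
have PA : P A by rewrite /P subxx eqxx.
case: (arg_minnP (fun Y : {set {group gT}} => #|Y|) PA) => X /andP[XA /eqP eX] minX.
have AF : A \subset F by apply/subsetP => M; rewrite inE => /andP[].
have XF : X \subset F := subset_trans XA AF.
have small M : M \in X ->
    N :&: \bigcap_(L in X :\ M) gval L != N :&: \bigcap_(L in A) gval L.
  move=> MX; apply/negP => /eqP e.
  have := minX (X :\ M); rewrite /P (subset_trans (subD1set X M) XA) e eqxx.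
  by move=> /(_ isT); rewrite (cardsD1 M X) MX add1n ltnn.
pose fK (M : {group gT}) := (M :&: N)%G.
have iK : {in X &, injective fK}.
  move=> M1 M2 M1X M2X e; apply/eqP/negP => /negP ne.
  have e' : M1 :&: N = M2 :&: N by exact: (congr1 (@gval gT) e).
  move: (small M2 M2X); rewrite -eX; apply/negP/negPn; rewrite eqEsubset capD1S andbT.
  apply/subsetP => x; rewrite !inE => /andP[xN /bigcapP xL]; rewrite xN /=.
  apply/bigcapP => L LX; case: (eqVneq L M2) => [->|LM].
    have : x \in M1 :&: N by rewrite inE xN xL // !inE ne.
    by rewrite e' inE => /andP[].
  by apply: xL; rewrite !inE LM.
have c1 : #|X| <= MaxDim_act T N.
  rewrite -(card_in_imset iK); apply: MaxDim_act_ge.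
    move=> K /imsetP[M MX ->]; have := subsetP XA _ MX; rewrite inE => /andP[MF nNM].
    exact: maxinv_MN (hF _ MF) nNM.
  apply/forallP => K; apply/implyP => /imsetP[M MX ->].
  have pr : N :&: \bigcap_(L in X) gval L \proper N :&: \bigcap_(L in X :\ M) gval L.
    by rewrite properEneq capD1S andbT eq_sym eX small.
  have /properP[_ [x xin xnin]] := pr.
  move: xin; rewrite inE => /andP[xN /bigcapP xL].
  apply/properP; split; first exact: capD1S.
  exists x.
    rewrite inE xN /=; apply/bigcapP => K0; rewrite !inE => /andP[KM /imsetP[M' M'X eK]].
    rewrite eK inE xN andbT; apply: xL; rewrite !inE M'X andbT.
    by apply: contraNneq KM => eM; rewrite eK eM.
  apply: contra xnin; rewrite !inE xN /= => /bigcapP xK; apply/bigcapP => L LX.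
  by have := xK (fK L) (imset_f _ LX); rewrite inE => /andP[].
set R := F :\: X.
have eF : #|F| = #|X| + #|R| by rewrite -(cardsID X F) (setIidPr XF).
rewrite eF leq_add //.
pose g (M : {group gT}) := odflt 1 [pick x | [&& x \in H,
   [forall L in F, (L != M) ==> (x \in gval L)] & x \notin M]].
have gP M : M \in F -> [/\ g M \in H, forall L, L \in F -> L != M -> g M \in L & g M \notin M].
  move=> MF; rewrite /g; case: pickP => [x /and3P[xH /forallP xL xM]|none] /=.
    split=> // L LF LM; have := xL L; rewrite LF LM //.
  have [x [xH xL] xM] := gen_pos_wit _ _ _ gF MF.
  have := none x; rewrite xH xM andbT /=; move/negP; case.
  apply/forallP => L; apply/implyP => LF; apply/implyP => LM; exact: xL.
pose t M := remgr N T (g M).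
pose n M := divgr N T (g M).
have tnP M : M \in F -> [/\ t M \in T, n M \in N & g M = n M * t M].
  move=> MF; have [gH _ _] := gP M MF.
  have gNT : g M \in N * T by rewrite eH.
  by split; [exact: mem_remgr | exact: mem_divgr | exact: divgr_eq].
have key M : M \in R -> t M \notin <<[set t M' | M' in R :\ M]>>.
  move=> MR; have := MR; rewrite inE => /andP[MnX MF].
  pose G0 := (H :&: M :&: \bigcap_(L in X) L)%G.
  have G0H : G0 \subset H by rewrite /= -setIA subsetIl.
  have nNG0 : G0 \subset 'N(N) := subset_trans G0H (normal_norm nNH).
  have eW : (G0 <*> N)%G = G0 * N :> {set gT} by rewrite /= norm_joinEl.
  have sW : <<[set t M' | M' in R :\ M]>> \subset (G0 <*> N)%G.
    rewrite gen_subG; apply/subsetP => y /imsetP[M' M'R ->].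
    move: M'R; rewrite !inE => /andP[M'M /andP[M'nX M'F]].
    have [tT nN eg] := tnP M' M'F; have [gH gL gnM] := gP M' M'F.
    have -> : t M' = (n M')^-1 * g M' by rewrite eg mulKg.
    rewrite groupM //; first by rewrite groupV; exact: (subsetP (joing_subr _ _) _ nN).
    have gG0 : g M' \in G0.
      rewrite /G0 /= !inE gH gL //= ?(eq_sym M) //.
    apply/bigcapP => L LX; apply: gL; first exact: (subsetP XF).
    by apply: contraNneq M'nX => <-.
    exact: (subsetP (joing_subl _ _) _ gG0).
  apply/negP => /(subsetP sW) tW.
  have [tT nN eg] := tnP M MF; have [gH gL gnM] := gP M MF.
  have gW : g M \in (G0 <*> N)%G.
    by rewrite eg groupM // (subsetP (joing_subr _ _)).
  move: gW; rewrite -[gval _]/(gval (G0 <*> N)%G) eW => /mulsgP[y n0 yG0 n0N eg2].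
  move: yG0; rewrite /= !inE => /andP[/andP[yH yM] /bigcapP yX].
  have n0e : n0 = y^-1 * g M by rewrite eg2 mulKg.
  have n0X : n0 \in N :&: \bigcap_(L in X) gval L.
    rewrite inE n0N /=; apply/bigcapP => L LX; rewrite n0e groupM ?groupV ?yX //.
    by apply: gL; [exact: (subsetP XF) | apply: contraNneq MnX => <-].
  have n0M : n0 \in M.
    case: (boolP (N \subset M)) => [NM|nNM]; first exact: (subsetP NM).
    move: n0X; rewrite eX inE => /andP[_ /bigcapP]; apply.
    by rewrite inE MF nNM.
  by move: gnM; rewrite eg2 groupM.
set s := [set t M | M in R].
have iT : {in R &, injective t}.
  move=> M1 M2 M1R M2R e; apply/eqP/negP => /negP ne.
  move: (key M1 M1R); rewrite e; apply/negP/negPn; apply: mem_gen.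
  by apply: imset_f; rewrite in_setD1 eq_sym ne M2R.
have sT : s \subset T.
  by apply/subsetP => y /imsetP[M MR ->]; have [] := tnP M (subsetP (subsetDl F X) _ MR).
have irr : irredundant s.
  apply/forallP => h; apply/implyP => /imsetP[M MR ->]; apply/negP => /eqP e.
  have : t M \in <<s>> by apply: mem_gen; exact: imset_f.
  rewrite -e; apply/negP; apply: contra (key M MR); apply: (subsetP (genS _)).
  apply/subsetP => y; rewrite !inE => /andP[yt /imsetP[M' M'R ey]].
  rewrite ey; apply: imset_f; rewrite in_setD1 M'R andbT.
  by apply: contraNneq yt => eM; rewrite ey eM.
rewrite -(card_in_imset iT); apply: leq_trans (i_irr_ge _ _ sT irr) _.
by move: flT; rewrite /flat => /eqP <-; exact: m_gen_le.
Qed.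

End Main.
End Gen.

Theorem corollary3p5 (gT : finGroupType) (H N T : {group gT}) :
  N ><| T = H -> abelian N -> flat T ->
  MaxDim H = MaxDim_act T N + MaxDim T.
Proof.
move=> sd abN flT; apply/eqP; rewrite eqn_leq.
rewrite (MaxDim_leq _ _ _ _ sd abN flT).

by rewrite (MaxDim_geq _ _ _ _ sd).
Qed.
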